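(* Let $G$ be a finite abelian group, $M$ a $\hat G$-linear, left inductive monoid, and $e$ a non-zero idempotent of $M$ with $\mathcal J$-class $J=\mathcal J_e$. Then there exists a positive integer $d$ such that $P(e)e\cong\hat G_J^{\oplus d}$ as right $\hat G$-linear $\hat G_J$-representations.
   Context: $\hat G=G\sqcup\{0\}$ with $0$ absorbing. $\mathrm{Vect}_{\hat G}$: objects are finite pointed sets with an action of $\hat G$ ($0v=0$, $g0=0$) such that $G$ acts freely on nonzero elements; morphisms $f$ satisfy $f(0)=0$, $f(gv)=gf(v)$, $f(v_1)=f(v_2)\neq0\Rightarrow Gv_1=Gv_2$; $\oplus$ is disjoint union with zeros identified. A $\hat G$-linear monoid is a finite monoid $M$ with absorbing element $0_M$ containing $G$ as a subgroup of units commuting with all of $M$, with $G$ acting freely by translation on $M\setminus\{0_M\}$. For $a\in M$, $J(a)=MaM$, $\mathcal J_a$ its $\mathcal J$-class ($a\sim b\iff J(a)=J(b)$), $I(a)=\{x\in J(a):MxM\neq J(a)\}$, $P(a)=(J(a)\setminus I(a))\cup\{0\}$ with product $xy$ if $xy\in J(a)\setminus I(a)$, else $0$. $M$ is left inductive if for every idempotent $e$, left translation by each $m\in M$ on $P(e)$ ($m\cdot x=mx$ if in $J(e)\setminus I(e)$, else $0$) makes $P(e)$ an $M$-representation by morphisms of $\mathrm{Vect}_{\hat G}$ with $0_M$ acting as zero and $g\in G$ as the scalar $g$. $G_J=eMe\cap J$ is a group with identity $e$, $\hat G_J=G_J\sqcup\{0\}$. $P(e)e=\{xe: x\in P(e)\}$,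 on which $\hat G_J$ acts on the right by multiplication in $P(e)$ and $G$ acts by scalars; $\hat G_J$ itself is a right $\hat G_J$-representation by right translation, and $\hat G_J^{\oplus d}$ is the direct sum of $d$ copies. *)

(* Defs.v *)
From mathcomp Require Import all_boot all_fingroup.
Set Implicit Arguments.
Unset Strict Implicit.
Unset Printing Implicit Defensive.

Section Vect.
Variable gT : finGroupType.

(* (PV, zV, actV) is an object of Vect_{\hat G}: a finite pointed set (the
   ambient types used below are finite) with a \hat G action, 0 fixed, and G
   acting freely on non-zero elements. *)
Definition vect_obj (V : Type) (PV : pred V) (zV : V) (actV : gT -> V -> V) : Prop :=
  [/\ PV zV, (forall g, actV g zV = zV),
      (forall g x, PV x -> PV (actV g x)),
      (forall x, PV x -> actV 1%g x = x) /\
      (forall g h x, PV x -> actV (g * h)%g x = actV g (actV h x)) &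
      (forall g x, PV x -> x <> zV -> actV g x = x -> g = 1%g)].

Definition vect_hom (V W : Type) (PV : pred V) (PW : pred W) (zV : V) (zW : W)
    (actV : gT -> V -> V) (actW : gT -> W -> W) (f : V -> W) : Prop :=
  [/\ (forall x, PV x -> PW (f x)),
      f zV = zW,
      (forall g x, PV x -> f (actV g x) = actW g (f x)) &
      (forall x y, PV x -> PV y -> f x = f y -> f x <> zW ->
         exists g, x = actV g y)].
End Vect.

Section Monoid.
Variables (gT : finGroupType) (M : finType) (mul : M -> M -> M) (one zero : M)
          (iota : gT -> M).

Definition is_Ghat_linear_monoid : Prop :=
  (forall x y z, mul x (mul y z) = mul (mul x y) z) /\
  (forall x, mul one x = x /\ mul x one = x) /\
  (forall x, mul zero x = zero /\ mul x zero = zero) /\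
  iota 1%g = one /\
  (forall g h, iota (g * h)%g = mul (iota g) (iota h)) /\
  injective iota /\
  (forall g m, mul (iota g) m = mul m (iota g)) /\
  (forall g m, m <> zero -> mul (iota g) m = m -> g = 1%g).

Definition Jset (a : M) : {set M} :=
  [set x | [exists u, [exists v, x == mul (mul u a) v]]].
Definition Iset (a : M) : {set M} := [set x in Jset a | Jset x != Jset a].
Definition Jclass (a : M) : {set M} := Jset a :\: Iset a.
Definition Pset (a : M) : {set M} := Jclass a :|: [set zero].
(* product in P(a) (also: left translation of m on P(a)) *)
Definition pmul (a x y : M) : M := if mul x y \in Jclass a then mul x y else zero.
Definition scal (g : gT) (x : M) : M := mul (iota g) x.

Definition left_inductive : Prop :=
  forall e, mul e e = e ->
    let P := fun x => x \in Pset e in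
    vect_obj P zero scal /\
    (forall m, vect_hom P P zero zero scal scal (pmul e m)) /\
    (forall x, P x -> pmul e one x = x) /\
    (forall m n x, P x -> pmul e (mul m n) x = pmul e m (pmul e n x)) /\
    (forall x, P x -> pmul e zero x = zero) /\
    (forall g x, P x -> pmul e (iota g) x = scal g x).

Definition GJ (e : M) : {set M} :=
  [set x in Jclass e | [exists m, x == mul (mul e m) e]].
Definition GJhat (e : M) : {set M} := GJ e :|: [set zero].

Definition PEe (e : M) : {set M} := [set pmul e x e | x in Pset e].

(* \hat G_J^{\oplus d}: None is 0, Some (i, h) is h in the i-th copy *)
Definition sumC (e : M) (d : nat) : pred (option ('I_d * M)) :=
  fun v => match v with None => true | Some (_, h) => h \in GJ e end.
Definition sum_scal (d : nat) (g : gT) (v : option ('I_d * M)) :=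
  match v with None => None | Some (i, h) => Some (i, mul (iota g) h) end.
Definition sum_ract (e : M) (d : nat) (v : option ('I_d * M)) (h : M) :=
  match v with
  | None => None
  | Some (i, x) => if pmul e x h == zero then None else Some (i, pmul e x h)
  end.

Definition PEe_iso_sum (e : M) (d : nat) : Prop :=
  exists (phi : M -> option ('I_d * M)) (psi : option ('I_d * M) -> M),
    let P := fun x => x \in PEe e in
    vect_hom P (@sumC e d) zero None scal (@sum_scal d) phi /\
    vect_hom (@sumC e d) P None zero (@sum_scal d) scal psi /\
    (forall x, P x -> psi (phi x) = x) /\
    (forall v, @sumC e d v -> phi (psi v) = v) /\
    (forall x h, P x -> h \in GJhat e -> phi (pmul e x h) = sum_ract e (phi x) h) /\
    (forall v h, @sumC e d v -> h \in GJhat e ->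
       psi (sum_ract e v h) = pmul e (psi v) h).
End Monoid.

(* Main.v *)
Require Import Defs.
From mathcomp Require Import all_boot all_fingroup.
Set Implicit Arguments.
Unset Strict Implicit.
Unset Printing Implicit Defensive.

Section Stab.
Variables (M : finType) (mul : M -> M -> M) (one : M).
Hypotheses (mA : forall x y z, mul x (mul y z) = mul (mul x y) z)
  (m1x : forall x, mul one x = x) (mx1 : forall x, mul x one = x).

Fixpoint pw x n := if n is n'.+1 then mul x (pw x n') else one.

Lemma pwS' x n : pw x n.+1 = mul (pw x n) x.
Proof.
elim: n => [|n IH] /=; first by rewrite mx1 m1x.
by rewrite -mA -IH.
Qed.

Lemma pwD x n m : pw x (n + m) = mul (pw x n) (pw x m).
Proof. elim: n => [|n IH] /=; first by rewrite m1x. by rewrite IH mA. Qed.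

Lemma pw_iter p e w : e = mul (mul p e) w -> forall n, e = mul (mul (pw p n) e) (pw w n).
Proof.
move=> H; elim=> [|n IH] /=; first by rewrite m1x mx1.
transitivity (mul (mul p e) w) => //.
by rewrite {1}IH -[mul w (pw w n)]/(pw w n.+1) pwS' !mA.
Qed.

Lemma pigeon w : exists i j, i < j /\ pw w i = pw w j.
Proof.
pose f : 'I_(#|M|.+1) -> M := fun k => pw w k.
have : ~~ injectiveb f.
  apply/negP => /injectiveP inj; have := leq_card _ inj.
  by rewrite card_ord ltnn.
case/injectivePn => i [j] neq eqf.
case: (ltngtP i j) => [lt|gt|eq].
- by exists i, j.
- by exists j, i.
- by move: neq; rewrite (val_inj eq) eqxx.
Qed.

Lemma stab e a u w : mul a e = a -> e = mul (mul u a) w -> exists v, e = mul v a.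
Proof.
move=> Hae Hw.
pose p := mul u a.
have H : e = mul (mul p e) w by rewrite /p -(mA u a e) Hae.
have [i [j [lij Hij]]] := pigeon w.
have Hm : mul e (pw w (j - i)) = e.
  rewrite {1}(pw_iter H i) -mA -pwD subnKC ?(ltnW lij) //.
  by rewrite -Hij -(pw_iter H i).
have Hj : (0 < j - i) by rewrite subn_gt0.
move: Hj; case E: (j - i) => [|m] // _.
rewrite E in Hm.
exists (mul (pw p m) u).
rewrite {1}(pw_iter H m.+1) -mA Hm pwS' /p -!mA Hae.
by [].
Qed.
End Stab.

Section Main.
Variables (gT : finGroupType) (M : finType) (mul : M -> M -> M) (one zero : M) (iota : gT -> M).
Hypotheses (mA : forall x y z, mul x (mul y z) = mul (mul x y) z)
 (m1x : forall x, mul one x = x) (mx1 : forall x, mul x one = x)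
 (m0x : forall x, mul zero x = zero) (mx0 : forall x, mul x zero = zero)
 (i1 : iota 1%g = one) (iM : forall g h, iota (g*h)%g = mul (iota g) (iota h))
 (iC : forall g m, mul (iota g) m = mul m (iota g)).
Variable e : M.
Hypotheses (ee : mul e e = e) (ez : e <> zero).

Lemma JsetP x a : reflect (exists u v, x = mul (mul u a) v) (x \in Jset mul a).
Proof.
rewrite inE; apply: (iffP existsP) => [[u /existsP [v /eqP H]]|[u [v H]]].
  by exists u, v.
by exists u; apply/existsP; exists v; apply/eqP.
Qed.

Lemma Jset_refl a : a \in Jset mul a.
Proof. by apply/JsetP; exists one, one; rewrite m1x mx1. Qed.

Lemma Jset_trans x y a : y \in Jset mul x -> x \in Jset mul a -> y \in Jset mul a.
Proof.
move=> /JsetP [u1 [v1 ->]] /JsetP [u2 [v2 ->]].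
by apply/JsetP; exists (mul u1 u2), (mul v2 v1); rewrite !mA.
Qed.

Lemma JclassE x : (x \in Jclass mul e) = (x \in Jset mul e) && (e \in Jset mul x).
Proof.
rewrite /Jclass /Iset in_setD [x \in [set _ in _ | _]]in_set.
case Hx: (x \in Jset mul e) => //=; rewrite andbT.
rewrite negbK; apply/eqP/idP => [E|Hex]; first by rewrite E Jset_refl.
apply/setP => y; apply/idP/idP => Hy.
  exact: Jset_trans Hy Hx.
exact: Jset_trans Hy Hex.
Qed.

Lemma JclassP x : reflect ((exists u v, x = mul (mul u e) v) /\ (exists u v, e = mul (mul u x) v))
   (x \in Jclass mul e).
Proof.
rewrite JclassE; apply: (iffP andP) => [[/JsetP H1 /JsetP H2]|[H1 H2]]; first by [].
by split; apply/JsetP.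
Qed.

Lemma zero_notJ : zero \notin Jclass mul e.
Proof.
apply/negP => /JclassP [_ [u [v]]].
by rewrite mx0 m0x.
Qed.

Definition L := [set a in Jclass mul e | mul a e == a].

Lemma LP a : reflect ([/\ a \in Jclass mul e & mul a e = a]) (a \in L).
Proof. by rewrite /L in_set; apply: (iffP andP) => [[H /eqP]|[H ->]]. Qed.

Lemma e_J : e \in Jclass mul e.
Proof. by rewrite JclassE Jset_refl. Qed.

Lemma e_L : e \in L.
Proof. by apply/LP; split; [exact: e_J|]. Qed.

Lemma GJP h : reflect ([/\ h \in Jclass mul e, mul e h = h & mul h e = h]) (h \in GJ mul e).
Proof.
rewrite /GJ in_set; apply: (iffP andP) => [[Hj /existsP [m /eqP E]]|[Hj H1 H2]].
  by split => //; rewrite E; [rewrite !mA ee | rewrite -!mA ee].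
by split => //; apply/existsP; exists h; rewrite H1 H2.
Qed.

Lemma GJ_L h : h \in GJ mul e -> h \in L.
Proof. by case/GJP => ? ? ?; apply/LP. Qed.

Lemma L_J a : a \in L -> a \in Jclass mul e.
Proof. by case/LP. Qed.

Lemma L_stab a : a \in L -> exists v, e = mul v a.
Proof.
case/LP => /JclassP [_ [u [w Hw]]] Hae.
exact: (stab mA m1x mx1 Hae Hw).
Qed.

Lemma GJ_inv h : h \in GJ mul e -> exists2 h', h' \in GJ mul e & mul h h' = e.
Proof.
case/GJP => /JclassP [_ [u [w Hw]]] H1 H2.
pose mul' x y := mul y x.
have mA' : forall x y z, mul' x (mul' y z) = mul' (mul' x y) z by move=> *; rewrite /mul' mA.
have [v Hv] := @stab M mul' one mA' mx1 m1x e h w u H1 (etrans Hw (esym (mA _ _ _))).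
rewrite /mul' in Hv.
exists (mul (mul e v) e); last by rewrite !mA H2 -Hv ee.
apply/GJP; split.
- apply/JclassP; split; first by exists e, (mul v e); rewrite ee mA.
  by exists h, one; rewrite mx1 !mA H2 -Hv ee.
- by rewrite !mA ee.
- by rewrite -mA ee.
Qed.

Lemma L_closed a h : a \in L -> h \in GJ mul e -> mul a h \in L.
Proof.
move=> Ha Hh; have [v Hv] := L_stab Ha.
have [h' Hh' Hhh'] := GJ_inv Hh.
case/LP: Ha => /JclassP [[u1 [v1 Ha1]] _] Hae.
case/GJP: Hh => _ _ Hhe.
apply/LP; split; last by rewrite -mA Hhe.
apply/JclassP; split.
  by exists u1, (mul v1 h); rewrite Ha1 !mA.
by exists v, h'; rewrite -mA -(mA a) Hhh' Hae.
Qed.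

Lemma GJ_closed h k : h \in GJ mul e -> k \in GJ mul e -> mul h k \in GJ mul e.
Proof.
move=> Hh Hk; have /LP [HJ He] := L_closed (GJ_L Hh) Hk.
apply/GJP; split => //.
by case/GJP: Hh => _ Heh _; rewrite mA Heh.
Qed.

Lemma L_free a h k : a \in L -> h \in GJ mul e -> k \in GJ mul e -> mul a h = mul a k -> h = k.
Proof.
move=> Ha /GJP [_ Hh _] /GJP [_ Hk _] E.
have [v Hv] := L_stab Ha.
by rewrite -Hh -Hk Hv -!mA E.
Qed.

Lemma iota_e_GJ g : mul (iota g) e \in GJ mul e.
Proof.
apply/GJP; split.
- apply/JclassP; split; first by exists (iota g), one; rewrite mx1.
  by exists (iota g^-1), one; rewrite mx1 mA -iM mulVg i1 m1x.
- by rewrite mA -iC -mA ee.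
- by rewrite -mA ee.
Qed.

Lemma iota_L g a : a \in L -> mul (iota g) a \in L.
Proof.
move=> Ha; have /LP [_ Hae] := Ha.
have -> : mul (iota g) a = mul a (mul (iota g) e).
  by rewrite -{1}Hae mA iC -!mA iC.
exact: L_closed (iota_e_GJ g).
Qed.

Lemma iota_GJ g h : h \in GJ mul e -> mul (iota g) h \in GJ mul e.
Proof.
move=> Hh; have /GJP [_ Heh _] := Hh.
have -> : mul (iota g) h = mul (mul (iota g) e) h by rewrite -mA Heh.
exact: GJ_closed (iota_e_GJ g) Hh.
Qed.

Lemma zero_notL : zero \notin L.
Proof. by apply/negP => /L_J; apply/negP; exact: zero_notJ. Qed.

Lemma e_GJ : e \in GJ mul e.
Proof. by apply/GJP; split; rewrite ?ee //; exact: e_J. Qed.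

Definition orb a b := [exists h in GJ mul e, b == mul a h].

Lemma orbP a b : reflect (exists2 h, h \in GJ mul e & b = mul a h) (orb a b).
Proof.
apply: (iffP existsP) => [[h /andP [Hh /eqP E]]|[h Hh E]]; first by exists h.
by exists h; rewrite Hh E eqxx.
Qed.

Lemma orb_refl a : a \in L -> orb a a.
Proof. by case/LP => _ Hae; apply/orbP; exists e; rewrite ?Hae //; exact: e_GJ. Qed.

Lemma orb_sym a b : a \in L -> orb a b -> orb b a.
Proof.
case/LP => _ Hae /orbP [h Hh ->]; have [h' Hh' Hhh'] := GJ_inv Hh.
by apply/orbP; exists h' => //; rewrite -mA Hhh' Hae.
Qed.

Lemma orb_trans a b c : orb a b -> orb b c -> orb a c.
Proof.
move=> /orbP [h Hh ->] /orbP [k Hk ->]; apply/orbP; exists (mul h k).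
  exact: GJ_closed. by rewrite mA.
Qed.

Lemma orb_L a b : a \in L -> orb a b -> b \in L.
Proof. by move=> Ha /orbP [h Hh ->]; exact: L_closed. Qed.

Definition rep a := odflt a [pick b | (b \in L) && orb b a].

Lemma rep_spec a : a \in L -> rep a \in L /\ orb (rep a) a.
Proof.
move=> Ha; rewrite /rep; case: pickP => [b /andP [Hb Ho]|H] //=.
by have := H a; rewrite Ha orb_refl.
Qed.

Lemma rep_eq a b : a \in L -> orb a b -> rep a = rep b.
Proof.
move=> Ha Hab; have Hb := orb_L Ha Hab.
rewrite /rep.
have -> : [pick x | (x \in L) && orb x a] = [pick x | (x \in L) && orb x b].
  apply: eq_pick => x.
  case Hx: (x \in L) => //=; apply/idP/idP => H.
    exact: orb_trans H Hab.
  exact: orb_trans H (orb_sym Ha Hab).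
case: pickP => //= H.
by have := H b; rewrite Hb orb_refl.
Qed.

Lemma rep_rep a : a \in L -> rep (rep a) = rep a.
Proof. by move=> Ha; have [H1 H2] := rep_spec Ha; exact: rep_eq H1 H2. Qed.

Definition R := [set rep a | a in L].

Lemma rep_R a : a \in L -> rep a \in R.
Proof. by move=> Ha; apply: imset_f. Qed.

Lemma R_L r : r \in R -> r \in L /\ rep r = r.
Proof.
case/imsetP => a Ha ->; split; first by case: (rep_spec Ha).
exact: rep_rep.
Qed.

Definition idx a : 'I_#|R| := enum_rank_in (rep_R e_L) (rep a).

Lemma idx_rep a : a \in L -> idx (rep a) = idx a.
Proof. by move=> Ha; rewrite /idx rep_rep. Qed.

Definition coef a := odflt zero [pick h | (h \in GJ mul e) && (a == mul (rep a) h)].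

Lemma coef_spec a : a \in L -> coef a \in GJ mul e /\ a = mul (rep a) (coef a).
Proof.
move=> Ha; have [_ /orbP [h Hh E]] := rep_spec Ha.
rewrite /coef; case: pickP => [k /andP [Hk /eqP Ek]|H] //=.
by have := H h; rewrite Hh -E eqxx.
Qed.

Definition phi x : option ('I_#|R| * M) := if x \in L then Some (idx x, coef x) else None.
Definition psi (v : option ('I_#|R| * M)) : M :=
  match v with None => zero | Some (i, h) => mul (enum_val i) h end.

Lemma phi0 : phi zero = None.
Proof. by rewrite /phi (negbTE zero_notL). Qed.

Lemma phi_L a : a \in L -> phi a = Some (idx a, coef a).
Proof. by rewrite /phi => ->. Qed.

Lemma phi_rep r h : r \in L -> rep r = r -> h \in GJ mul e -> phi (mul r h) = Some (idx r, h).
Proof.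
move=> Hr Er Hh.
have Hb := L_closed Hr Hh.
have Ho : orb r (mul r h) by apply/orbP; exists h.
have Erb : rep (mul r h) = r by rewrite -(rep_eq Hr Ho) Er.
rewrite (phi_L Hb) /idx Erb Er; congr (Some (_, _)).
have [Hc Ec] := coef_spec Hb.
rewrite Erb in Ec.
by apply: (L_free Hr Hc Hh); rewrite -Ec.
Qed.

Lemma psi_phi a : a \in L -> psi (phi a) = a.
Proof.
move=> Ha; rewrite (phi_L Ha) /= /idx (enum_rankK_in _ (rep_R Ha)).
by case: (coef_spec Ha) => _ <-.
Qed.

Lemma psi_L (i : 'I_#|R|) h : h \in GJ mul e -> mul (enum_val i) h \in L.
Proof.
move=> Hh; have [Hr _] := R_L (enum_valP i).
exact: L_closed.
Qed.

Lemma phi_psi (i : 'I_#|R|) h : h \in GJ mul e -> phi (mul (enum_val i) h) = Some (i, h).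
Proof.
move=> Hh; have [Hr Er] := R_L (enum_valP i).
by rewrite (phi_rep Hr Er Hh) /idx Er enum_valK_in.
Qed.

Lemma PEeP x : (x \in PEe mul zero e) = (x == zero) || (x \in L).
Proof.
apply/imsetP/orP => [[y Hy ->]|[/eqP ->|Hx]].
- rewrite /pmul; case: ifP => H; last by left.
  by right; apply/LP; split => //; rewrite -mA ee.
- exists zero; first by rewrite /Pset in_setU in_set1 eqxx orbT.
  by rewrite /pmul m0x (negbTE zero_notJ).
- have /LP [HJ Hxe] := Hx.
  exists x; first by rewrite /Pset in_setU HJ.
  by rewrite /pmul Hxe HJ.
Qed.

Lemma pmul0l x : pmul mul zero e zero x = zero.
Proof. by rewrite /pmul m0x; case: ifP. Qed.

Lemma pmul0r x : pmul mul zero e x zero = zero.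
Proof. by rewrite /pmul mx0; case: ifP. Qed.

Lemma pmulL x y : mul x y \in L -> pmul mul zero e x y = mul x y.
Proof. by move=> H; rewrite /pmul (L_J H). Qed.

Lemma main_sec : exists d : nat, (0 < d)%N /\ PEe_iso_sum mul zero iota e d.
Proof.
exists #|R|; split.
  by apply/card_gt0P; exists (rep e); exact: rep_R e_L.
exists phi, psi.
split; [split|split; [split|split; [|split; [|split]]]].
- move=> x; rewrite PEeP => /orP [/eqP ->|Hx]; first by rewrite phi0.
  by rewrite (phi_L Hx) /sumC /=; case: (coef_spec Hx).
- exact: phi0.
- move=> g x; rewrite PEeP => /orP [/eqP ->|Hx]; rewrite /scal.
    by rewrite mx0 phi0.
  have [Hc Ex] := coef_spec Hx; have [Hr _] := rep_spec Hx.
  have -> : mul (iota g) x = mul (rep x) (mul (iota g) (coef x)).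
    by rewrite {1}Ex !mA (iC g (rep x)).
  by rewrite (phi_rep Hr (rep_rep Hx) (iota_GJ g Hc)) (phi_L Hx) /= idx_rep.
- move=> x y; rewrite !PEeP => /orP [/eqP ->|Hx] /orP [/eqP ->|Hy] E Hn;
    exists 1%g; rewrite /scal i1 m1x //.
  all: try by rewrite phi0 in Hn.
  all: try by rewrite E phi0 in Hn.
  by rewrite -(psi_phi Hx) -(psi_phi Hy) E.
- move=> [[i h]|]; rewrite /sumC /= => Hh; rewrite PEeP; last by rewrite eqxx.
  by rewrite psi_L ?orbT.
- by [].
- move=> g [[i h]|] _ /=; rewrite /scal; last by rewrite mx0.
  by rewrite !mA (iC g (enum_val i)).
- move=> [[i h]|] [[j k]|]; rewrite /sumC /= => Hh Hk E Hn; exists 1%g;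
    rewrite /= ?i1 ?m1x //.
  all: try by rewrite -(phi_psi i Hh) E phi_psi.
  all: try by case: Hn.
  all: try by rewrite E in Hn.
- move=> x; rewrite PEeP => /orP [/eqP ->|Hx]; first by rewrite phi0.
  exact: psi_phi.
- move=> [[i h]|]; rewrite /sumC /= => Hh; last exact: phi0.
  exact: phi_psi.
- move=> x h; rewrite PEeP => /orP [/eqP ->|Hx]; first by rewrite pmul0l phi0.
  rewrite /GJhat in_setU in_set1 => /orP [Hh|/eqP ->]; last first.
    by rewrite pmul0r phi0 (phi_L Hx) /= pmul0r eqxx.
  have [Hc Ex] := coef_spec Hx; have [Hr _] := rep_spec Hx.
  have Hch := GJ_L (GJ_closed Hc Hh).
  rewrite (pmulL (L_closed Hx Hh)) (phi_L Hx) /= (pmulL Hch).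
  case: eqP => [E|_]; first by rewrite E in Hch; move: Hch; rewrite (negbTE zero_notL).
  rewrite {1}Ex -mA (phi_rep Hr (rep_rep Hx) (GJ_closed Hc Hh)) idx_rep //.
- move=> [[i k]|] h; rewrite /sumC /= => Hk; last by rewrite pmul0l.
  rewrite /GJhat in_setU in_set1 => /orP [Hh|/eqP ->]; last first.
    by rewrite /= !pmul0r eqxx.
  have Hkh := GJ_L (GJ_closed Hk Hh).
  rewrite /= (pmulL Hkh).
  case: eqP => [E|_]; first by rewrite E in Hkh; move: Hkh; rewrite (negbTE zero_notL).
  by rewrite /= pmulL -mA // psi_L // GJ_closed.
Qed.

End Main.

Theorem mainTheorem8 (gT : finGroupType) (M : finType) (mul : M -> M -> M)
    (one zero : M) (iota : gT -> M) :
  abelian [set: gT] ->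
  is_Ghat_linear_monoid mul one zero iota ->
  left_inductive mul one zero iota ->
  forall e : M, mul e e = e -> e <> zero ->
  exists d : nat, (0 < d)%N /\ PEe_iso_sum mul zero iota e d.
Proof.
move=> _ [mA [H1 [H0 [i1 [iM [_ [iC _]]]]]]] _ e ee ez.
have m1x x : mul one x = x by case: (H1 x).
have mx1 x : mul x one = x by case: (H1 x).
have m0x x : mul zero x = zero by case: (H0 x).
have mx0 x : mul x zero = zero by case: (H0 x).
by apply: main_sec.
Qed.
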